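(* Let $\mathcal C=(A,\bar A,B,\bar B,C,\bar C,D,\bar D,E,\bar E,F,\bar F)$ be a coefficient tuple and $\mathcal W=(Q,\bar Q,S,\bar S,R,\bar R,G,\bar G)$ a weight tuple satisfying Assumption (S); let $\mathcal C_1,\mathcal W_1$ be as in the context. Then: (1) the first Riccati equation (for $P$) of $\mathrm{Ric}(\mathcal C_1,\mathcal W_1)$ is the same equation as the first Riccati equation of $\mathrm{Ric}(\mathcal C,\mathcal W)$; (2) the second Riccati equation (for $\Pi$) of $\mathrm{Ric}(\mathcal C_1,\mathcal W_1)$ is the same equation as the second Riccati equation of $\mathrm{Ric}(\mathcal C,\mathcal W)$. That is, the terminal conditions coincide and, for every $t$ and every $P_t,\Pi_t\in\mathbb S^n$ for which $\Sigma_{0t}$ and $\Sigma_{1t}$ are invertible, the corresponding left-hand side expressions coincide.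
   Context: Fix $T>0$, integers $n,m\ge1$, a nonempty $\Theta\subseteq\mathbb R\setminus\{0\}$ and a $\sigma$-finite measure $\nu$ on $\Theta$ with $\int_\Theta(1\wedge\theta^2)\nu(d\theta)<\infty$. $\mathbb S^k$: symmetric $k\times k$ matrices; $M\ge\alpha I$ means $M-\alpha I$ positive semidefinite. $L^\infty(0,T;M)$: bounded functions; $L^2_\nu(M)$: deterministic $r:[0,T]\times\Theta\to M$ with $\sup_t\int_\Theta|r(t,\theta)|^2\nu(d\theta)<\infty$. A coefficient tuple $\mathcal C=(A,\bar A,B,\bar B,C,\bar C,D,\bar D,E,\bar E,F,\bar F)$: deterministic $A,\bar A,C,\bar C\in L^\infty(0,T;\mathbb R^{n\times n})$, $B,\bar B,D,\bar D\in L^\infty(0,T;\mathbb R^{n\times m})$, $E,\bar E\in L^2_\nu(\mathbb R^{n\times n})$, $F,\bar F\in L^2_\nu(\mathbb R^{n\times m})$. A weight tuple $\mathcal W=(Q,\bar Q,S,\bar S,R,\bar R,G,\bar G)$: $Q,\bar Q\in L^\infty(0,T;\mathbb S^n)$, $R,\bar R\in L^\infty(0,T;\mathbb S^m)$, $S,\bar S\in L^\infty(0,T;\mathbb R^{n\times m})$, $G,\bar G\in\mathbb S^n$. Riccati system $\mathrm{Ric}(\mathcal C,\mathcal W)$: for deterministic $P,\Pi:[0,T]\to\mathbb S^n$, with $\Sigma_{0t}=R_t+D_t^\top P_tD_t+\int_\Theta F_{t,\theta}^\top P_tF_{t,\theta}\nu(d\theta)$, $\Sigma_{1t}=R_t+\bar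 R_t+(D_t+\bar D_t)^\top P_t(D_t+\bar D_t)+\int_\Theta(F_{t,\theta}+\bar F_{t,\theta})^\top P_t(F_{t,\theta}+\bar F_{t,\theta})\nu(d\theta)$: $\dot P_t+P_tA_t+A_t^\top P_t+C_t^\top P_tC_t+\int_\Theta E_{t,\theta}^\top P_tE_{t,\theta}\nu(d\theta)+Q_t-\big(S_t+P_tB_t+C_t^\top P_tD_t+\int_\Theta E_{t,\theta}^\top P_tF_{t,\theta}\nu(d\theta)\big)\Sigma_{0t}^{-1}\big(S_t^\top+B_t^\top P_t+D_t^\top P_tC_t+\int_\Theta F_{t,\theta}^\top P_tE_{t,\theta}\nu(d\theta)\big)=0$, $P_T=G$; $\dot\Pi_t+\Pi_t(A_t+\bar A_t)+(A_t+\bar A_t)^\top\Pi_t+(C_t+\bar C_t)^\top P_t(C_t+\bar C_t)+\int_\Theta(E_{t,\theta}+\bar E_{t,\theta})^\top P_t(E_{t,\theta}+\bar E_{t,\theta})\nu(d\theta)+Q_t+\bar Q_t-\big[(S_t+\bar S_t)+\Pi_t(B_t+\bar B_t)+(C_t+\bar C_t)^\top P_t(D_t+\bar D_t)+\int_\Theta(E_{t,\theta}+\bar E_{t,\theta})^\top P_t(F_{t,\theta}+\bar F_{t,\theta})\nu(d\theta)\big]\Sigma_{1t}^{-1}\big[(S_t+\bar S_t)^\top+(B_t+\bar B_t)^\top\Pi_t+(D_t+\bar D_t)^\top P_t(C_t+\bar C_t)+\int_\Theta(F_{t,\theta}+\bar F_{t,\theta})^\top P_t(E_{t,\theta}+\bar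 E_{t,\theta})\nu(d\theta)\big]=0$, $\Pi_T=G+\bar G$. Assumption (S) for $\mathcal W$: there is $\alpha_0>0$ such that for all $t$: $R_t\ge\alpha_0I$, $R_t+\bar R_t\ge\alpha_0I$, $Q_t-S_tR_t^{-1}S_t^\top\ge0$, $Q_t+\bar Q_t-(S_t+\bar S_t)(R_t+\bar R_t)^{-1}(S_t+\bar S_t)^\top\ge0$, $G\ge0$, $G+\bar G\ge0$. Under Assumption (S), define $A_1=A-BR^{-1}S^\top$, $\bar A_1=A+\bar A-(B+\bar B)(R+\bar R)^{-1}(S+\bar S)^\top-A_1$, $C_1=C-DR^{-1}S^\top$, $\bar C_1=C+\bar C-(D+\bar D)(R+\bar R)^{-1}(S+\bar S)^\top-C_1$, $E_{1t,\theta}=E_{t,\theta}-F_{t,\theta}R_t^{-1}S_t^\top$, $\bar E_{1t,\theta}=E_{t,\theta}+\bar E_{t,\theta}-(F_{t,\theta}+\bar F_{t,\theta})(R_t+\bar R_t)^{-1}(S_t+\bar S_t)^\top-E_{1t,\theta}$, $Q_1=Q-SR^{-1}S^\top$, $\bar Q_1=Q+\bar Q-(S+\bar S)(R+\bar R)^{-1}(S+\bar S)^\top-Q_1$; $\mathcal C_1=(A_1,\bar A_1,B,\bar B,C_1,\bar C_1,D,\bar D,E_1,\bar E_1,F,\bar F)$ and $\mathcal W_1=(Q_1,\bar Q_1,0,0,R,\bar R,G,\bar G)$. *)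

(* Defs.v *)
From HB Require Import structures.
From mathcomp Require Import all_boot all_order all_algebra.
From mathcomp Require Import all_classical all_reals all_analysis.
Set Implicit Arguments. Unset Strict Implicit. Unset Printing Implicit Defensive.
Import Order.TTheory GRing.Theory Num.Theory.
Local Open Scope classical_set_scope.
Local Open Scope ring_scope.

Section Defs.
Variable R : realType.

Definition symmx k (M : 'M[R]_k) : Prop := M^T = M.
Definition psdmx k (M : 'M[R]_k) : Prop :=
  forall v : 'cV[R]_k, 0 <= (v^T *m M *m v) ord0 ord0.
Definition mx_ge_scalar k (M : 'M[R]_k) (a : R) : Prop := psdmx (M - a%:M).

Definition sqnorm k l (M : 'M[R]_(k, l)) : R := \sum_i \sum_j (M i j) ^+ 2.

Definition mx_bounded (T : R) k l (f : R -> 'M[R]_(k, l)) : Prop :=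
  exists K : R, forall t, 0 <= t <= T -> forall i j, `|f t i j| <= K.

Definition mxint (nu : {measure set R -> \bar R}) (Th : set R) k l
  (f : R -> 'M[R]_(k, l)) : 'M[R]_(k, l) :=
  \matrix_(i, j) Rintegral nu Th (fun th => f th i j).

Definition L2nu (T : R) (nu : {measure set R -> \bar R}) (Th : set R) k l
  (r : R -> R -> 'M[R]_(k, l)) : Prop :=
  (forall t, 0 <= t <= T -> forall i j, measurable_fun Th (fun th => r t th i j))
  /\ exists K : R, forall t, 0 <= t <= T ->
       (\int[nu]_(th in Th) (sqnorm (r t th))%:E <= K%:E)%E.

Definition levy_setting (nu : {measure set R -> \bar R}) (Th : set R) : Prop :=
  [/\ measurable Th, Th !=set0, ~ Th 0, sigma_finite Th nu &
      (\int[nu]_(th in Th) (Num.min 1 (th ^+ 2))%:E < +oo)%E].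
End Defs.

Record coef (R : realType) (n m : nat) := Coef {
  cA : R -> 'M[R]_n; cAb : R -> 'M[R]_n;
  cB : R -> 'M[R]_(n, m); cBb : R -> 'M[R]_(n, m);
  cC : R -> 'M[R]_n; cCb : R -> 'M[R]_n;
  cD : R -> 'M[R]_(n, m); cDb : R -> 'M[R]_(n, m);
  cE : R -> R -> 'M[R]_n; cEb : R -> R -> 'M[R]_n;
  cF : R -> R -> 'M[R]_(n, m); cFb : R -> R -> 'M[R]_(n, m) }.

Record weight (R : realType) (n m : nat) := Weight {
  wQ : R -> 'M[R]_n; wQb : R -> 'M[R]_n;
  wS : R -> 'M[R]_(n, m); wSb : R -> 'M[R]_(n, m);
  wR : R -> 'M[R]_m; wRb : R -> 'M[R]_m;
  wG : 'M[R]_n; wGb : 'M[R]_n }.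

Section Ric.
Variables (R : realType) (n m : nat) (T : R).
Variables (nu : {measure set R -> \bar R}) (Th : set R).
Local Open Scope ring_scope.

Definition coef_adm (c : coef R n m) : Prop :=
  [/\ [/\ mx_bounded T (cA c), mx_bounded T (cAb c), mx_bounded T (cB c) &
      mx_bounded T (cBb c)], [/\ mx_bounded T (cC c), mx_bounded T (cCb c),
      mx_bounded T (cD c) & mx_bounded T (cDb c)] &
   [/\ L2nu T nu Th (cE c), L2nu T nu Th (cEb c),
       L2nu T nu Th (cF c) & L2nu T nu Th (cFb c)]].

Definition weight_adm (w : weight R n m) : Prop :=
  [/\ (forall t, 0 <= t <= T -> [/\ symmx (wQ w t), symmx (wQb w t),
                                   symmx (wR w t) & symmx (wRb w t)]),
      [/\ mx_bounded T (wQ w), mx_bounded T (wQb w), mx_bounded T (wS w) &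
      mx_bounded T (wSb w)], mx_bounded T (wR w), mx_bounded T (wRb w) &
      symmx (wG w) /\ symmx (wGb w)].

Definition assumptionS (w : weight R n m) : Prop :=
  exists2 a0 : R, 0 < a0 &
  (forall t, 0 <= t <= T ->
    [/\ mx_ge_scalar (wR w t) a0, mx_ge_scalar (wR w t + wRb w t) a0,
        psdmx (wQ w t - wS w t *m invmx (wR w t) *m (wS w t)^T) &
        psdmx (wQ w t + wQb w t - (wS w t + wSb w t)
                 *m invmx (wR w t + wRb w t) *m (wS w t + wSb w t)^T)])
  /\ psdmx (wG w) /\ psdmx (wG w + wGb w).

Definition ricSigma0 (c : coef R n m) (w : weight R n m) t (P : 'M[R]_n) : 'M[R]_m :=
  wR w t + (cD c t)^T *m P *m cD c t
  + mxint nu Th (fun th => (cF c t th)^T *m P *m cF c t th).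

Definition ricSigma1 (c : coef R n m) (w : weight R n m) t (P : 'M[R]_n) : 'M[R]_m :=
  wR w t + wRb w t + (cD c t + cDb c t)^T *m P *m (cD c t + cDb c t)
  + mxint nu Th (fun th => (cF c t th + cFb c t th)^T *m P
                            *m (cF c t th + cFb c t th)).

(** left-hand side of the first Riccati equation, dP standing for \dot P_t *)
Definition ric1_lhs (c : coef R n m) (w : weight R n m) t (P dP : 'M[R]_n)
  : 'M[R]_n :=
  dP + P *m cA c t + (cA c t)^T *m P + (cC c t)^T *m P *m cC c t
  + mxint nu Th (fun th => (cE c t th)^T *m P *m cE c t th) + wQ w t
  - (wS w t + P *m cB c t + (cC c t)^T *m P *m cD c t
     + mxint nu Th (fun th => (cE c t th)^T *m P *m cF c t th))
    *m invmx (ricSigma0 c w t P)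
    *m ((wS w t)^T + (cB c t)^T *m P + (cD c t)^T *m P *m cC c t
        + mxint nu Th (fun th => (cF c t th)^T *m P *m cE c t th)).

Definition ric1_terminal (w : weight R n m) : 'M[R]_n := wG w.

(** left-hand side of the second Riccati equation, dPi standing for \dot Pi_t *)
Definition ric2_lhs (c : coef R n m) (w : weight R n m) t (P Pi dPi : 'M[R]_n)
  : 'M[R]_n :=
  let AA := cA c t + cAb c t in
  let BB := cB c t + cBb c t in
  let CC := cC c t + cCb c t in
  let DD := cD c t + cDb c t in
  let EE := fun th => cE c t th + cEb c t th in
  let FF := fun th => cF c t th + cFb c t th in
  let SS := wS w t + wSb w t in
  dPi + Pi *m AA + AA^T *m Pi + CC^T *m P *m CC
  + mxint nu Th (fun th => (EE th)^T *m P *m EE th) + (wQ w t + wQb w t)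
  - (SS + Pi *m BB + CC^T *m P *m DD
     + mxint nu Th (fun th => (EE th)^T *m P *m FF th))
    *m invmx (ricSigma1 c w t P)
    *m (SS^T + BB^T *m Pi + DD^T *m P *m CC
        + mxint nu Th (fun th => (FF th)^T *m P *m EE th)).

Definition ric2_terminal (w : weight R n m) : 'M[R]_n := wG w + wGb w.

Definition ric_coef1 (c : coef R n m) (w : weight R n m) : coef R n m :=
  let Ri t := invmx (wR w t) in
  let RRi t := invmx (wR w t + wRb w t) in
  let SS t := wS w t + wSb w t in
  let A1 t := cA c t - cB c t *m Ri t *m (wS w t)^T in
  let C1 t := cC c t - cD c t *m Ri t *m (wS w t)^T in
  let E1 t th := cE c t th - cF c t th *m Ri t *m (wS w t)^T in
  Coef
    A1
    (fun t => cA c t + cAb c t - (cB c t + cBb c t) *m RRi t *m (SS t)^T - A1 t)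
    (cB c) (cBb c)
    C1
    (fun t => cC c t + cCb c t - (cD c t + cDb c t) *m RRi t *m (SS t)^T - C1 t)
    (cD c) (cDb c)
    E1
    (fun t th => cE c t th + cEb c t th
                 - (cF c t th + cFb c t th) *m RRi t *m (SS t)^T - E1 t th)
    (cF c) (cFb c).

Definition ric_weight1 (w : weight R n m) : weight R n m :=
  let Q1 t := wQ w t - wS w t *m invmx (wR w t) *m (wS w t)^T in
  Weight
    Q1
    (fun t => wQ w t + wQb w t - (wS w t + wSb w t)
                *m invmx (wR w t + wRb w t) *m (wS w t + wSb w t)^T - Q1 t)
    (fun _ => 0) (fun _ => 0) (wR w) (wRb w) (wG w) (wGb w).
End Ric.

(* Main.v *)
Require Import Defs.
From HB Require Import structures.
From mathcomp Require Import all_boot all_order all_algebra.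
From mathcomp Require Import all_classical all_reals all_analysis.
From mathcomp Require Import measurable_realfun.
From mathcomp Require Import ring lra.
Set Implicit Arguments. Unset Strict Implicit. Unset Printing Implicit Defensive.
Import Order.TTheory GRing.Theory Num.Theory.
Local Open Scope classical_set_scope.
Local Open Scope ring_scope.

Lemma eD (R : comRingType) k l (A B : 'M[R]_(k,l)) i j : (A + B) i j = A i j + B i j.
Proof. by rewrite mxE. Qed.
Lemma eN (R : comRingType) k l (A : 'M[R]_(k,l)) i j : (- A) i j = - A i j.
Proof. by rewrite mxE. Qed.
Lemma e0 (R : comRingType) k l i j : (0 : 'M[R]_(k,l)) i j = 0.
Proof. by rewrite mxE. Qed.
Lemma trD (R : comRingType) k l (A B : 'M[R]_(k,l)) : (A + B)^T = A^T + B^T.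
Proof. by apply/matrixP => i j; rewrite !mxE. Qed.
Lemma trN (R : comRingType) k l (A : 'M[R]_(k,l)) : (- A)^T = - A^T.
Proof. by apply/matrixP => i j; rewrite !mxE. Qed.

Ltac mxring := apply/matrixP => ? ?; rewrite ?(eD, eN, e0); ring.

Definition gen (R : comUnitRingType) k l (dP P1 P2 A C Q IEE : 'M[R]_k) (B D S IEF : 'M[R]_(k,l))
  (IFE : 'M[R]_(l,k)) (Rm IFF : 'M[R]_l) : 'M[R]_k :=
 dP + P1 *m A + A^T *m P1 + C^T *m P2 *m C + IEE + Q
 - (S + P1 *m B + C^T *m P2 *m D + IEF) *m invmx (Rm + D^T *m P2 *m D + IFF)
   *m (S^T + B^T *m P1 + D^T *m P2 *m C + IFE).

Lemma core (R : comUnitRingType) k l (H : 'M[R]_k) (L : 'M[R]_(k,l)) (M X : 'M[R]_(l,k))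
  (Sg Sgi : 'M[R]_l) :
  Sg *m Sgi = 1%:M -> Sgi *m Sg = 1%:M ->
  (H - L *m X - X^T *m M + X^T *m Sg *m X) - (L - X^T *m Sg) *m Sgi *m (M - Sg *m X)
  = H - L *m Sgi *m M.
Proof.
move=> h1 h2.
have e1 p (Y : 'M[R]_(p,l)) : Y *m Sgi *m Sg = Y by rewrite -mulmxA h2 mulmx1.
have e2 p (Y : 'M[R]_(p,l)) : Y *m Sg *m Sgi = Y by rewrite -mulmxA h1 mulmx1.
rewrite !mulmxBl !mulmxBr !mulmxA !e1 !e2.
mxring.
Qed.

Lemma gen_shift (R : comUnitRingType) k l (dP P1 P2 A C Q IEE : 'M[R]_k) (B D S IEF : 'M[R]_(k,l))
  (IFE : 'M[R]_(l,k)) (Rm IFF : 'M[R]_l) (X : 'M[R]_(l,k)) :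
  Rm *m X = S^T -> X^T *m Rm = S -> Rm + D^T *m P2 *m D + IFF \in unitmx ->
  gen dP P1 P2 (A - B *m X) (C - D *m X) (Q - X^T *m S^T - S *m X + X^T *m Rm *m X)
    (IEE - IEF *m X - X^T *m IFE + X^T *m IFF *m X) B D 0 (IEF - X^T *m IFF)
    (IFE - IFF *m X) Rm IFF
  = gen dP P1 P2 A C Q IEE B D S IEF IFE Rm IFF.
Proof.
move=> hRX hXR hU.
set Sg := Rm + D^T *m P2 *m D + IFF.
set L := S + P1 *m B + C^T *m P2 *m D + IEF.
set M := S^T + B^T *m P1 + D^T *m P2 *m C + IFE.
set H := dP + P1 *m A + A^T *m P1 + C^T *m P2 *m C + IEE + Q.
have EL : 0 + P1 *m B + (C - D *m X)^T *m P2 *m D + (IEF - X^T *m IFF) = L - X^T *m Sg.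
  rewrite /L /Sg trD trN trmx_mul ?(mulmxBl, mulmxDl, mulmxBr, mulmxDr, mulNmx, mulmxN) !mulmxA hXR.
  mxring.
have EM : 0^T + B^T *m P1 + D^T *m P2 *m (C - D *m X) + (IFE - IFF *m X) = M - Sg *m X.
  rewrite /M /Sg trmx0 ?(mulmxBl, mulmxDl, mulmxBr, mulmxDr, mulNmx, mulmxN) !mulmxA hRX.
  mxring.
have EH : dP + P1 *m (A - B *m X) + (A - B *m X)^T *m P1 + (C - D *m X)^T *m P2 *m (C - D *m X)
   + (IEE - IEF *m X - X^T *m IFE + X^T *m IFF *m X) + (Q - X^T *m S^T - S *m X + X^T *m Rm *m X)
   = H - L *m X - X^T *m M + X^T *m Sg *m X.
  rewrite /H /L /M /Sg !trD !trN !trmx_mul ?(mulmxBl, mulmxDl, mulmxBr, mulmxDr, mulNmx, mulmxN) !mulmxA.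
  mxring.
rewrite /gen -/Sg -/L -/M -/H EL EM EH core //.
  by rewrite mulmxV.
by rewrite mulVmx.
Qed.

Definition rint (R : realType) (nu : {measure set R -> \bar R}) (Th : set R) (f : R -> R) :=
  @integrable _ R R nu Th (EFin \o f).
Definition sqi (R : realType) (nu : {measure set R -> \bar R}) (Th : set R) (f : R -> R) :=
  measurable_fun Th f /\ rint nu Th (fun x => f x ^+ 2).

Lemma rint_ext (R : realType) (nu : {measure set R -> \bar R}) (Th : set R) (f g : R -> R) :
  (forall x, f x = g x) -> rint nu Th g -> rint nu Th f.
Proof. by move=> e; have -> : f = g by apply: funext. Qed.

Lemma rintD (R : realType) (nu : {measure set R -> \bar R}) (Th : set R) (f g : R -> R) :
  measurable Th -> rint nu Th f -> rint nu Th g -> rint nu Th (fun x => f x + g x).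
Proof.
move=> mTh hf hg; have := integrableD mTh hf hg.
by apply: eq_integrable => // x _ /=.
Qed.

Lemma rintZ (R : realType) (nu : {measure set R -> \bar R}) (Th : set R) (k : R) (f : R -> R) :
  measurable Th -> rint nu Th f -> rint nu Th (fun x => k * f x).
Proof.
move=> mTh hf; have := integrableZl mTh k hf.
by apply: eq_integrable => // x _ /=.
Qed.

Lemma rintN (R : realType) (nu : {measure set R -> \bar R}) (Th : set R) (f : R -> R) :
  measurable Th -> rint nu Th f -> rint nu Th (fun x => - f x).
Proof. by move=> mTh hf; apply: (rint_ext _ (rintZ (-1) mTh hf)) => x; rewrite mulN1r. Qed.

Lemma rint0 (R : realType) (nu : {measure set R -> \bar R}) (Th : set R) :
  measurable Th -> rint nu Th (fun _ => 0).
Proof. by move=> mTh; have := @integrable0 _ _ _ nu Th; apply: eq_integrable. Qed.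

Lemma rint_sum (R : realType) (nu : {measure set R -> \bar R}) (Th : set R) p
  (F : 'I_p -> R -> R) : measurable Th ->
  (forall k, rint nu Th (F k)) -> rint nu Th (fun x => \sum_(k < p) F k x).
Proof.
move=> mTh hF; elim: p F hF => [|p ih] F hF.
  by apply: (rint_ext _ (rint0 nu mTh)) => x; rewrite big_ord0.
apply: (rint_ext _ (rintD mTh (ih (fun k => F (widen_ord (leqnSn p) k)) _) (hF ord_max))).
  by move=> x; rewrite big_ord_recr.
by move=> k; exact: hF.
Qed.

Lemma Rint_ext (R : realType) (nu : {measure set R -> \bar R}) (Th : set R) (f g : R -> R) :
  (forall x, f x = g x) -> Rintegral nu Th f = Rintegral nu Th g.
Proof. by move=> e; have -> : f = g by apply: funext. Qed.

Lemma Rint_sum (R : realType) (nu : {measure set R -> \bar R}) (Th : set R) p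
  (F : 'I_p -> R -> R) : measurable Th ->
  (forall k, rint nu Th (F k)) ->
  Rintegral nu Th (fun x => \sum_(k < p) F k x) = \sum_(k < p) Rintegral nu Th (F k).
Proof.
move=> mTh hF; elim: p F hF => [|p ih] F hF.
  rewrite big_ord0 (_ : Rintegral nu Th _ = Rintegral nu Th (fun _ => 0)).
    by rewrite Rintegral_cst // mul0r.
  by apply: Rint_ext => x; rewrite big_ord0.
rewrite big_ord_recr /= -(ih (fun k => F (widen_ord (leqnSn p) k))) //.
rewrite -RintegralD //; last first.
- exact: hF.
- by apply: rint_sum => // k; exact: hF.
by apply: Rint_ext => x; rewrite big_ord_recr.
Qed.

Lemma sqi_mul (R : realType) (nu : {measure set R -> \bar R}) (Th : set R) (f g : R -> R) :
  measurable Th -> sqi nu Th f -> sqi nu Th g -> rint nu Th (fun x => f x * g x).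
Proof.
move=> mTh [mf hf] [mg hg].
apply: (le_integrable mTh _ _ (rintD mTh hf hg)).
  by apply/measurable_EFinP; exact: measurable_funM.
move=> x _ /=; rewrite lee_fin [X in _ <= X]ger0_norm ?addr_ge0 ?sqr_ge0 // normrM.
have h1 := real_normK (num_real (f x)); have h2 := real_normK (num_real (g x)).
have := sqr_ge0 (`|f x| - `|g x|); have := normr_ge0 (f x); have := normr_ge0 (g x).
nra.
Qed.

Lemma sqi_add (R : realType) (nu : {measure set R -> \bar R}) (Th : set R) (f g : R -> R) :
  measurable Th -> sqi nu Th f -> sqi nu Th g -> sqi nu Th (fun x => f x + g x).
Proof.
move=> mTh [mf hf] [mg hg]; split; first exact: measurable_funD.
apply: (le_integrable mTh _ _ (rintD mTh (rintZ 2 mTh hf) (rintZ 2 mTh hg))).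
  apply/measurable_EFinP; exact: measurable_funX (measurable_funD mf mg).
move=> x _ /=; rewrite lee_fin ger0_norm ?sqr_ge0 // ger0_norm; last first.
  by rewrite addr_ge0 // mulr_ge0 // sqr_ge0.
have := sqr_ge0 (f x - g x); nra.
Qed.

Definition mxi (R : realType) (nu : {measure set R -> \bar R}) (Th : set R) k l
  (F : R -> 'M[R]_(k,l)) := forall i j, rint nu Th (fun x => F x i j).
Definition mxsq (R : realType) (nu : {measure set R -> \bar R}) (Th : set R) k l
  (F : R -> 'M[R]_(k,l)) := forall i j, sqi nu Th (fun x => F x i j).

Lemma mxiD (R : realType) (nu : {measure set R -> \bar R}) (Th : set R) k l
  (F G : R -> 'M[R]_(k,l)) : measurable Th ->
  mxi nu Th F -> mxi nu Th G -> mxi nu Th (fun x => F x + G x).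
Proof.
move=> mTh hF hG i j; apply: (rint_ext _ (rintD mTh (hF i j) (hG i j))).
by move=> x; rewrite mxE.
Qed.

Lemma mxiN (R : realType) (nu : {measure set R -> \bar R}) (Th : set R) k l
  (F : R -> 'M[R]_(k,l)) : measurable Th ->
  mxi nu Th F -> mxi nu Th (fun x => - F x).
Proof.
move=> mTh hF i j; apply: (rint_ext _ (rintN mTh (hF i j))).
by move=> x; rewrite mxE.
Qed.

Lemma mxi_mulr (R : realType) (nu : {measure set R -> \bar R}) (Th : set R) k l p
  (F : R -> 'M[R]_(k,l)) (M : 'M[R]_(l,p)) : measurable Th ->
  mxi nu Th F -> mxi nu Th (fun x => F x *m M).
Proof.
move=> mTh hF i j.
apply: (rint_ext _ (rint_sum (F := fun q x => M q j * F x i q) mTh _)).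
  by move=> x; rewrite mxE; apply: eq_bigr => q _; rewrite mulrC.
by move=> q; apply: rintZ.
Qed.

Lemma mxi_mull (R : realType) (nu : {measure set R -> \bar R}) (Th : set R) k l p
  (F : R -> 'M[R]_(l,p)) (M : 'M[R]_(k,l)) : measurable Th ->
  mxi nu Th F -> mxi nu Th (fun x => M *m F x).
Proof.
move=> mTh hF i j.
apply: (rint_ext _ (rint_sum (F := fun q x => M i q * F x q j) mTh _)).
  by move=> x; rewrite mxE.
by move=> q; apply: rintZ.
Qed.

Lemma mxsqD (R : realType) (nu : {measure set R -> \bar R}) (Th : set R) k l
  (F G : R -> 'M[R]_(k,l)) : measurable Th ->
  mxsq nu Th F -> mxsq nu Th G -> mxsq nu Th (fun x => F x + G x).
Proof.
move=> mTh hF hG i j; have [h1 h2] := sqi_add mTh (hF i j) (hG i j).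
have e : (fun x => (F x + G x) i j) = (fun x => F x i j + G x i j).
  by apply: funext => x; rewrite mxE.
by rewrite e.
Qed.

Lemma mxsq_quad (R : realType) (nu : {measure set R -> \bar R}) (Th : set R) k l p
  (X : R -> 'M[R]_(k,l)) (Y : R -> 'M[R]_(k,p)) (P : 'M[R]_k) : measurable Th ->
  mxsq nu Th X -> mxsq nu Th Y -> mxi nu Th (fun x => (X x)^T *m P *m Y x).
Proof.
move=> mTh hX hY i j.
apply: (rint_ext _ (rint_sum (F := fun q x => \sum_(r < k) P r q * (X x r i * Y x q j)) mTh _)).
  move=> x; rewrite mxE; apply: eq_bigr => q _; rewrite mxE mulr_suml.
  by apply: eq_bigr => r _; rewrite mxE; ring.
move=> q; apply: rint_sum => // r; apply: rintZ => //.
exact: sqi_mul.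
Qed.

Lemma mxintD (R : realType) (nu : {measure set R -> \bar R}) (Th : set R) k l
  (F G : R -> 'M[R]_(k,l)) : measurable Th ->
  mxi nu Th F -> mxi nu Th G ->
  mxint nu Th (fun x => F x + G x) = mxint nu Th F + mxint nu Th G.
Proof.
move=> mTh hF hG; apply/matrixP => i j; rewrite !mxE -RintegralD //;
  [|exact: hF|exact: hG].
by apply: Rint_ext => x; rewrite mxE.
Qed.

Lemma mxintN (R : realType) (nu : {measure set R -> \bar R}) (Th : set R) k l
  (F : R -> 'M[R]_(k,l)) : measurable Th ->
  mxi nu Th F -> mxint nu Th (fun x => - F x) = - mxint nu Th F.
Proof.
move=> mTh hF; apply/matrixP => i j; rewrite !mxE.
rewrite -mulN1r -RintegralZl //; last exact: hF.
by apply: Rint_ext => x; rewrite mxE mulN1r.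
Qed.

Lemma mxint_mulr (R : realType) (nu : {measure set R -> \bar R}) (Th : set R) k l p
  (F : R -> 'M[R]_(k,l)) (M : 'M[R]_(l,p)) : measurable Th ->
  mxi nu Th F -> mxint nu Th (fun x => F x *m M) = mxint nu Th F *m M.
Proof.
move=> mTh hF; apply/matrixP => i j; rewrite !mxE.
rewrite (@Rint_ext _ nu Th _ (fun x => \sum_(q < l) M q j * F x i q)); last first.
  by move=> x; rewrite mxE; apply: eq_bigr => q _; rewrite mulrC.
rewrite Rint_sum //; last by move=> q; apply: rintZ.
apply: eq_bigr => q _; rewrite mxE RintegralZl //; [by rewrite mulrC | exact: hF].
Qed.

Lemma mxint_mull (R : realType) (nu : {measure set R -> \bar R}) (Th : set R) k l p
  (F : R -> 'M[R]_(l,p)) (M : 'M[R]_(k,l)) : measurable Th ->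
  mxi nu Th F -> mxint nu Th (fun x => M *m F x) = M *m mxint nu Th F.
Proof.
move=> mTh hF; apply/matrixP => i j; rewrite !mxE.
rewrite (@Rint_ext _ nu Th _ (fun x => \sum_(q < l) M i q * F x q j)); last first.
  by move=> x; rewrite mxE.
rewrite Rint_sum //; last by move=> q; apply: rintZ.
apply: eq_bigr => q _; rewrite mxE RintegralZl //; exact: hF.
Qed.

Ltac mxi_auto := repeat first [ assumption | apply: mxsq_quad | apply: mxiD | apply: mxiN
  | apply: mxi_mulr | apply: mxi_mull ].

Lemma int_quad (R : realType) (nu : {measure set R -> \bar R}) (Th : set R) k l
  (E : R -> 'M[R]_k) (F : R -> 'M[R]_(k,l)) (P : 'M[R]_k) (X : 'M[R]_(l,k)) :
  measurable Th -> mxsq nu Th E -> mxsq nu Th F ->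
  mxint nu Th (fun x => (E x - F x *m X)^T *m P *m (E x - F x *m X))
  = mxint nu Th (fun x => (E x)^T *m P *m E x) - mxint nu Th (fun x => (E x)^T *m P *m F x) *m X
    - X^T *m mxint nu Th (fun x => (F x)^T *m P *m E x)
    + X^T *m mxint nu Th (fun x => (F x)^T *m P *m F x) *m X.
Proof.
move=> mTh hE hF.
have -> : (fun x => (E x - F x *m X)^T *m P *m (E x - F x *m X)) =
  (fun x => (E x)^T *m P *m E x + - ((E x)^T *m P *m F x *m X)
     + - (X^T *m ((F x)^T *m P *m E x)) + X^T *m ((F x)^T *m P *m F x *m X)).
  apply: funext => x.
  rewrite !trD !trN !trmx_mul ?(mulmxBl, mulmxDl, mulmxBr, mulmxDr, mulNmx, mulmxN) !mulmxA.
  mxring.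
rewrite !mxintD //; try by mxi_auto.
rewrite !mxintN //; try by mxi_auto.
rewrite !mxint_mull //; try by mxi_auto.
rewrite !mxint_mulr //; try by mxi_auto.
by rewrite !mulmxA.
Qed.

Lemma int_quadYZ (R : realType) (nu : {measure set R -> \bar R}) (Th : set R) k l
  (E : R -> 'M[R]_k) (F : R -> 'M[R]_(k,l)) (P : 'M[R]_k) (Y : 'M[R]_l) (Z : 'M[R]_(l,k)) :
  measurable Th -> mxsq nu Th E -> mxsq nu Th F ->
  mxint nu Th (fun x => (E x - F x *m Y *m Z)^T *m P *m (E x - F x *m Y *m Z))
  = mxint nu Th (fun x => (E x)^T *m P *m E x) - mxint nu Th (fun x => (E x)^T *m P *m F x) *m (Y *m Z)
    - (Y *m Z)^T *m mxint nu Th (fun x => (F x)^T *m P *m E x)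
    + (Y *m Z)^T *m mxint nu Th (fun x => (F x)^T *m P *m F x) *m (Y *m Z).
Proof.
move=> mTh hE hF; rewrite -int_quad //; congr mxint; apply: funext => x.
by rewrite mulmxA.
Qed.

Lemma int_lin1 (R : realType) (nu : {measure set R -> \bar R}) (Th : set R) k l
  (E : R -> 'M[R]_k) (F : R -> 'M[R]_(k,l)) (P : 'M[R]_k) (Y : 'M[R]_l) (Z : 'M[R]_(l,k)) :
  measurable Th -> mxsq nu Th E -> mxsq nu Th F ->
  mxint nu Th (fun x => (E x - F x *m Y *m Z)^T *m P *m F x)
  = mxint nu Th (fun x => (E x)^T *m P *m F x)
    - (Y *m Z)^T *m mxint nu Th (fun x => (F x)^T *m P *m F x).
Proof.
move=> mTh hE hF.
have -> : (fun x => (E x - F x *m Y *m Z)^T *m P *m F x) =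
  (fun x => (E x)^T *m P *m F x + - ((Y *m Z)^T *m ((F x)^T *m P *m F x))).
  apply: funext => x.
  rewrite !trD !trN !trmx_mul ?(mulmxBl, mulmxDl, mulmxBr, mulmxDr, mulNmx, mulmxN) !mulmxA.
  mxring.
rewrite !mxintD //; try by mxi_auto.
rewrite !mxintN //; try by mxi_auto.
rewrite !mxint_mull //; try by mxi_auto.
Qed.

Lemma int_lin2 (R : realType) (nu : {measure set R -> \bar R}) (Th : set R) k l
  (E : R -> 'M[R]_k) (F : R -> 'M[R]_(k,l)) (P : 'M[R]_k) (Y : 'M[R]_l) (Z : 'M[R]_(l,k)) :
  measurable Th -> mxsq nu Th E -> mxsq nu Th F ->
  mxint nu Th (fun x => (F x)^T *m P *m (E x - F x *m Y *m Z))
  = mxint nu Th (fun x => (F x)^T *m P *m E x)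
    - mxint nu Th (fun x => (F x)^T *m P *m F x) *m (Y *m Z).
Proof.
move=> mTh hE hF.
have -> : (fun x => (F x)^T *m P *m (E x - F x *m Y *m Z)) =
  (fun x => (F x)^T *m P *m E x + - ((F x)^T *m P *m F x *m (Y *m Z))).
  apply: funext => x.
  rewrite ?(mulmxBl, mulmxDl, mulmxBr, mulmxDr, mulNmx, mulmxN) !mulmxA.
  mxring.
rewrite !mxintD //; try by mxi_auto.
rewrite !mxintN //; try by mxi_auto.
rewrite !mxint_mulr //; try by mxi_auto.
Qed.

Lemma L2_mxsq (R : realType) (nu : {measure set R -> \bar R}) (Th : set R) (T : R) k l
  (r : R -> R -> 'M[R]_(k,l)) t : measurable Th -> L2nu T nu Th r -> 0 <= t <= T ->
  mxsq nu Th (r t).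
Proof.
move=> mTh [hm [K hK]] ht i j; split; first exact: hm.
have ms : measurable_fun Th (fun th => sqnorm (r t th)).
  apply: measurable_sum => a; apply: measurable_sum => b; apply: measurable_funX; exact: hm.
have isq : rint nu Th (fun th => sqnorm (r t th)).
  apply/integrableP; split; first exact/measurable_EFinP.
  apply: le_lt_trans (ltry K).
  apply: le_trans (hK t ht); rewrite le_eqVlt; apply/orP; left; apply/eqP.
  apply: eq_integral => x _ /=; rewrite ger0_norm //.
  by apply: sumr_ge0 => a _; apply: sumr_ge0 => b _; exact: sqr_ge0.
apply: (le_integrable mTh _ _ isq).
  by apply/measurable_EFinP; apply: measurable_funX; exact: hm.
move=> x _ /=; rewrite lee_fin !ger0_norm ?sqr_ge0 //; last first.
  by apply: sumr_ge0 => a _; apply: sumr_ge0 => b _; exact: sqr_ge0.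
rewrite /sqnorm (bigD1 i) //= (bigD1 j) //= -addrA lerDl addr_ge0 //.
  by apply: sumr_ge0 => b _; exact: sqr_ge0.
by apply: sumr_ge0 => a _; apply: sumr_ge0 => b _; exact: sqr_ge0.
Qed.

Lemma ge_unit (R : realType) k (M : 'M[R]_k) a : 0 < a -> mx_ge_scalar M a -> M \in unitmx.
Proof.
move=> a0 h; rewrite -row_free_unit -kermx_eq0.
case: (pickP (fun i => row i (kermx M) != 0)) => [i hi | hn]; last first.
  apply/eqP/row_matrixP => i; move: (hn i) => /negbFE/eqP ->; by rewrite row0.
exfalso.
set u := row i (kermx M).
have uM : u *m M = 0 by apply/sub_kermxP; exact: row_sub.
have [j hj] : exists j, u 0 j != 0.
  case: (pickP (fun j => u 0 j != 0)) => [j hj|hn']; first by exists j.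
  exfalso; move/eqP: hi; apply; apply/rowP => j.
  by move: (hn' j) => /negbFE/eqP ->; rewrite mxE.
have := h u^T; rewrite trmxK mulmxBr mulmxBl uM mul0mx mul_mx_scalar -scalemxAl.
rewrite !mxE sub0r oppr_ge0 pmulr_rle0 //; apply/negP; rewrite -ltNge.
rewrite (bigD1 j) //=.
have h1 : 0 <= \sum_(b < k | b != j) u 0 b * u^T b 0.
  by apply: sumr_ge0 => b _; rewrite [u^T _ _]mxE -expr2 sqr_ge0.
have h2 : 0 < u 0 j * u^T j 0 by rewrite [u^T _ _]mxE -expr2 exprn_even_gt0 // hj orbT.
lra.
Qed.

Lemma gen_shiftK (R : comUnitRingType) k l (dP P1 P2 A C Q IEE : 'M[R]_k) (B D S IEF : 'M[R]_(k,l))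
  (IFE : 'M[R]_(l,k)) (Rm IFF : 'M[R]_l) :
  Rm \in unitmx -> Rm^T = Rm -> Rm + D^T *m P2 *m D + IFF \in unitmx ->
  gen dP P1 P2 (A - B *m (invmx Rm *m S^T)) (C - D *m (invmx Rm *m S^T))
    (Q - S *m invmx Rm *m S^T)
    (IEE - IEF *m (invmx Rm *m S^T) - (invmx Rm *m S^T)^T *m IFE
       + (invmx Rm *m S^T)^T *m IFF *m (invmx Rm *m S^T)) B D 0
    (IEF - (invmx Rm *m S^T)^T *m IFF)
    (IFE - IFF *m (invmx Rm *m S^T)) Rm IFF
  = gen dP P1 P2 A C Q IEE B D S IEF IFE Rm IFF.
Proof.
move=> hU hT hS.
have hRX : Rm *m (invmx Rm *m S^T) = S^T by rewrite mulmxA mulmxV // mul1mx.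
have hXt : (invmx Rm *m S^T)^T = S *m invmx Rm by rewrite trmx_mul trmxK trmx_inv hT.
have hXR : (invmx Rm *m S^T)^T *m Rm = S by rewrite hXt -mulmxA mulVmx // mulmx1.
rewrite -(gen_shift dP P1 A C Q IEE B IEF IFE hRX hXR hS).
congr gen.
rewrite hXR hXt !mulmxA; mxring.
Qed.

Definition sumf (R : realType) k l (f g : R -> 'M[R]_(k,l)) := fun th => f th + g th.

Lemma ric1_gen (R : realType) n m (nu : {measure set R -> \bar R}) (Th : set R)
  (c : coef R n m) (w : weight R n m) t P dP :
  ric1_lhs nu Th c w t P dP = gen dP P P (cA c t) (cC c t) (wQ w t)
    (mxint nu Th (fun th => (cE c t th)^T *m P *m cE c t th)) (cB c t) (cD c t) (wS w t)
    (mxint nu Th (fun th => (cE c t th)^T *m P *m cF c t th))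
    (mxint nu Th (fun th => (cF c t th)^T *m P *m cE c t th)) (wR w t)
    (mxint nu Th (fun th => (cF c t th)^T *m P *m cF c t th)).
Proof. by []. Qed.

Lemma ric2_gen (R : realType) n m (nu : {measure set R -> \bar R}) (Th : set R)
  (c : coef R n m) (w : weight R n m) t P Pi dPi :
  ric2_lhs nu Th c w t P Pi dPi = gen dPi Pi P (cA c t + cAb c t) (cC c t + cCb c t)
    (wQ w t + wQb w t)
    (mxint nu Th (fun th => (sumf (cE c t) (cEb c t) th)^T *m P *m sumf (cE c t) (cEb c t) th))
    (cB c t + cBb c t) (cD c t + cDb c t) (wS w t + wSb w t)
    (mxint nu Th (fun th => (sumf (cE c t) (cEb c t) th)^T *m P *m sumf (cF c t) (cFb c t) th))
    (mxint nu Th (fun th => (sumf (cF c t) (cFb c t) th)^T *m P *m sumf (cE c t) (cEb c t) th))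
    (wR w t + wRb w t)
    (mxint nu Th (fun th => (sumf (cF c t) (cFb c t) th)^T *m P *m sumf (cF c t) (cFb c t) th)).
Proof. by []. Qed.

Lemma auxS (V : zmodType) (x y : V) : x + (y - x) = y.
Proof. by rewrite addrC subrK. Qed.

Theorem lemma3p3 (R : realType) (T : R) (n m : nat)
  (Th : set R) (nu : {measure set R -> \bar R})
  (c : coef R n m) (w : weight R n m) :
  0 < T -> (0 < n)%N -> (0 < m)%N ->
  levy_setting nu Th ->
  coef_adm T nu Th c -> weight_adm T w -> assumptionS T w ->
  (ric1_terminal (ric_weight1 w) = ric1_terminal w /\
   ric2_terminal (ric_weight1 w) = ric2_terminal w) /\
  (forall t, 0 <= t <= T ->
   forall P Pi dP dPi : 'M[R]_n, symmx P -> symmx Pi ->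
   ricSigma0 nu Th c w t P \in unitmx -> ricSigma1 nu Th c w t P \in unitmx ->
   ric1_lhs nu Th (ric_coef1 c w) (ric_weight1 w) t P dP = ric1_lhs nu Th c w t P dP /\
   ric2_lhs nu Th (ric_coef1 c w) (ric_weight1 w) t P Pi dPi
     = ric2_lhs nu Th c w t P Pi dPi).
Proof.
move=> _ _ _ [mTh _ _ _ _] [_ _ [hE hEb hF hFb]] [hsym _ _ _ _] [a0 a0pos [hS _]].
split; first by split.
move=> t ht P Pi dP dPi _ _ hU0 hU1.
have [sQ sQb sR sRb] := hsym t ht.
have [gR gRR _ _] := hS t ht.
have uR := ge_unit a0pos gR.
have uRR := ge_unit a0pos gRR.
have mE := L2_mxsq mTh hE ht.
have mF := L2_mxsq mTh hF ht.
have mEE : mxsq nu Th (sumf (cE c t) (cEb c t)).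
  exact: mxsqD mTh mE (L2_mxsq mTh hEb ht).
have mFF : mxsq nu Th (sumf (cF c t) (cFb c t)).
  exact: mxsqD mTh mF (L2_mxsq mTh hFb ht).
split.
- rewrite !ric1_gen.
  set X := invmx (wR w t) *m (wS w t)^T.
  have I1 : mxint nu Th (fun th => (cE (ric_coef1 c w) t th)^T *m P *m cE (ric_coef1 c w) t th)
    = mxint nu Th (fun x => (cE c t x)^T *m P *m cE c t x)
      - mxint nu Th (fun x => (cE c t x)^T *m P *m cF c t x) *m X
      - X^T *m mxint nu Th (fun x => (cF c t x)^T *m P *m cE c t x)
      + X^T *m mxint nu Th (fun x => (cF c t x)^T *m P *m cF c t x) *m X.
    exact: int_quadYZ.
  have I2 : mxint nu Th (fun th => (cE (ric_coef1 c w) t th)^T *m P *m cF (ric_coef1 c w) t th)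
    = mxint nu Th (fun x => (cE c t x)^T *m P *m cF c t x)
      - X^T *m mxint nu Th (fun x => (cF c t x)^T *m P *m cF c t x).
    exact: int_lin1.
  have I3 : mxint nu Th (fun th => (cF (ric_coef1 c w) t th)^T *m P *m cE (ric_coef1 c w) t th)
    = mxint nu Th (fun x => (cF c t x)^T *m P *m cE c t x)
      - mxint nu Th (fun x => (cF c t x)^T *m P *m cF c t x) *m X.
    exact: int_lin2.
  have eA : cA (ric_coef1 c w) t = cA c t - cB c t *m X by rewrite /= mulmxA.
  have eC : cC (ric_coef1 c w) t = cC c t - cD c t *m X by rewrite /= mulmxA.
  rewrite I1 I2 I3 eA eC.
  idtac "B".
  exact: (gen_shiftK dP P (cA c t) (cC c t) (wQ w t) _ (cB c t) (wS w t) _ _ uR sR hU0).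
- rewrite !ric2_gen.
  set Y := invmx (wR w t + wRb w t) *m (wS w t + wSb w t)^T.
  have eEf : sumf (cE (ric_coef1 c w) t) (cEb (ric_coef1 c w) t) =
    fun th => sumf (cE c t) (cEb c t) th - sumf (cF c t) (cFb c t) th
       *m invmx (wR w t + wRb w t) *m (wS w t + wSb w t)^T.
    by apply: funext => th; rewrite /sumf /= auxS.
  have eFf : sumf (cF (ric_coef1 c w) t) (cFb (ric_coef1 c w) t) = sumf (cF c t) (cFb c t).
    by [].
  rewrite eEf eFf.
  set EE := sumf (cE c t) (cEb c t).
  set FF := sumf (cF c t) (cFb c t).
  have I1 : mxint nu Th (fun th => ((fun th => EE th - FF th
       *m invmx (wR w t + wRb w t) *m (wS w t + wSb w t)^T) th)^T *m P *m
       (fun th => EE th - FF th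
       *m invmx (wR w t + wRb w t) *m (wS w t + wSb w t)^T) th)
    = mxint nu Th (fun x => (EE x)^T *m P *m EE x)
      - mxint nu Th (fun x => (EE x)^T *m P *m FF x) *m Y
      - Y^T *m mxint nu Th (fun x => (FF x)^T *m P *m EE x)
      + Y^T *m mxint nu Th (fun x => (FF x)^T *m P *m FF x) *m Y.
    exact: int_quadYZ.
  have I2 : mxint nu Th (fun th => ((fun th => EE th - FF th
       *m invmx (wR w t + wRb w t) *m (wS w t + wSb w t)^T) th)^T *m P *m FF th)
    = mxint nu Th (fun x => (EE x)^T *m P *m FF x)
      - Y^T *m mxint nu Th (fun x => (FF x)^T *m P *m FF x).
    exact: int_lin1.
  have I3 : mxint nu Th (fun th => (FF th)^T *m P *m (fun th => EE th - FF th
       *m invmx (wR w t + wRb w t) *m (wS w t + wSb w t)^T) th)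
    = mxint nu Th (fun x => (FF x)^T *m P *m EE x)
      - mxint nu Th (fun x => (FF x)^T *m P *m FF x) *m Y.
    exact: int_lin2.
  have eA : cA (ric_coef1 c w) t + cAb (ric_coef1 c w) t = cA c t + cAb c t
     - (cB c t + cBb c t) *m Y by rewrite /= auxS mulmxA.
  have eC : cC (ric_coef1 c w) t + cCb (ric_coef1 c w) t = cC c t + cCb c t
     - (cD c t + cDb c t) *m Y by rewrite /= auxS mulmxA.
  have eQ : wQ (ric_weight1 w) t + wQb (ric_weight1 w) t = wQ w t + wQb w t
     - (wS w t + wSb w t) *m invmx (wR w t + wRb w t) *m (wS w t + wSb w t)^T.
    by rewrite /= auxS.
  have eS : wS (ric_weight1 w) t + wSb (ric_weight1 w) t = 0 by rewrite /= addr0.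
  rewrite I1 I2 I3 eA eC eQ eS.
  idtac "D".
  have sRR : (wR w t + wRb w t)^T = wR w t + wRb w t by rewrite trD sR sRb.
  exact: (gen_shiftK dPi Pi _ _ _ _ _ (wS w t + wSb w t) _ _ uRR sRR hU1).
Qed.
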